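(* Let $n=p'^{\,2}q$ where $p',q$ are distinct primes both at least $7$, and let $A=S(n)$. Then $D_A(n)=5$.
   Context: $\mathbb{Z}_n$ is the integers mod $n$, $U(n)$ its unit group. For nonempty $A\subseteq\mathbb{Z}_n\setminus\{0\}$, a sequence $(x_1,\ldots,x_k)$ is an $A$-weighted zero-sum sequence if $\sum a_ix_i=0$ for some $a_i\in A$; $D_A(n)$ is the least $k$ such that every length-$k$ sequence in $\mathbb{Z}_n$ has a nonempty $A$-weighted zero-sum subsequence. For odd $n=\prod p_i^{r_i}$ and $a\in U(n)$, $\left(\frac{a}{n}\right)=\prod\left(\frac{a}{p_i}\right)^{r_i}$ (Legendre symbols of images mod $p_i$), and $S(n)$ is the kernel of $a\mapsto\left(\frac{a}{n}\right)$ on $U(n)$. *)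

(* Defs.v *)
From mathcomp Require Import all_boot all_order all_algebra.
Set Implicit Arguments. Unset Strict Implicit. Unset Printing Implicit Defensive.
Import GRing.Theory.
Local Open Scope ring_scope.

Definition legendre (p a : nat) : int :=
  if (p %| a)%N then 0
  else if [exists x : 'I_p, ((x * x) %% p == a %% p)%N] then 1 else -1.

Definition jacobi (n : nat) (a : 'Z_n) : int :=
  \prod_(p <- primes n) (legendre p (val a)) ^+ (logn p n).

Definition Sn (n : nat) : {set 'Z_n} :=
  [set a : 'Z_n | (a \is a GRing.unit) && (jacobi a == 1)].

Definition has_Azs (n : nat) (A : {set 'Z_n}) (k : nat) (x : 'I_k -> 'Z_n) : Prop :=
  exists I : {set 'I_k}, I != set0 /\
    exists a : 'I_k -> 'Z_n, (forall i, i \in I -> a i \in A) /\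
      \sum_(i in I) a i * x i = 0.

Definition Azs_prop (n : nat) (A : {set 'Z_n}) (k : nat) : Prop :=
  forall x : 'I_k -> 'Z_n, has_Azs A x.

Definition is_DA (n : nat) (A : {set 'Z_n}) (d : nat) : Prop :=
  Azs_prop A d /\ forall k, Azs_prop A k -> (d <= k)%N.

(* Main.v *)
Require Import Defs.
From mathcomp Require Import all_boot all_order all_algebra.
From mathcomp Require Import cyclic finfield ring.
Set Implicit Arguments. Unset Strict Implicit. Unset Printing Implicit Defensive.
Import GRing.Theory.

Definition cnt (m : seq bool) (P : nat -> bool) :=
  count (fun k => nth false m k && P k) (iota 0 5).
Definition Yc (f : nat -> nat) (m : seq bool) :=
  [&& has (nth false m) (iota 0 5),
      cnt m (fun k => f k == 0) != 1 &
      ~~ ((cnt m (fun k => f k == 0) == 0) && (cnt m (fun k => f k == 1) == 1))].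
Definition Zc (g : nat -> nat) (e : bool) (m : seq bool) :=
  (cnt m (fun k => g k != 0) != 1) &&
  ((cnt m (fun k => g k != 0) == 2) ==> (~~ odd (cnt m (fun k => g k == 2)) == e)).

Fixpoint lists {T} (a : seq T) n : seq (seq T) :=
  if n is n'.+1 then [seq x :: l | x <- a, l <- lists a n'] else [:: [::]].

Definition masks := lists [:: false; true] 5.
Definition configs := lists [:: 0; 1; 2] 5.
Definition YV := [seq [seq Yc (nth 0 l) m | m <- masks] | l <- configs].
Definition ZV := [seq [seq Zc (nth 0 l) e m | m <- masks] | l <- configs, e <- [:: false; true]].

Lemma check : all (fun vy => all (fun vz =>
   has (fun i => nth false vy i && nth false vz i) (iota 0 32)) ZV) YV.
Proof. vm_compute. reflexivity. Qed.

Lemma mem_lists (T : eqType) (a : seq T) n l : all (mem a) l -> size l = n -> l \in lists a n.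
Proof.
elim: n l => [|n IH] [|x l] //= /andP[xa al] [sl].
by apply: (allpairs_f (fun x l => x :: l)) => //; apply: IH.
Qed.

Lemma eq_Yc f f' m : (forall k, k < 5 -> f k = f' k) -> Yc f m = Yc f' m.
Proof.
move=> h; have H : forall b, cnt m (fun k => f k == b) = cnt m (fun k => f' k == b).
  by move=> b; apply: eq_in_count => k; rewrite mem_iota => /andP[_ /h ->].
by rewrite /Yc !H.
Qed.

Lemma eq_Zc g g' e m : (forall k, k < 5 -> g k = g' k) -> Zc g e m = Zc g' e m.
Proof.
move=> h; have H : forall P : nat -> bool, cnt m (fun k => P (g k)) = cnt m (fun k => P (g' k)).
  by move=> P; apply: eq_in_count => k; rewrite mem_iota => /andP[_ /h ->].
by rewrite /Zc (H (fun x => x != 0)) (H (fun x => x == 2)).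
Qed.

Lemma comb5 (f g : nat -> nat) (e : bool) :
  (forall k, k < 5 -> f k < 3) -> (forall k, k < 5 -> g k < 3) ->
  exists m : seq bool, Yc f m && Zc g e m.
Proof.
move=> hf hg.
pose l1 := map f (iota 0 5); pose l2 := map g (iota 0 5).
have inc : forall h : nat -> nat, (forall k, k < 5 -> h k < 3) -> map h (iota 0 5) \in configs.
  move=> h hh; apply: mem_lists; last by rewrite size_map size_iota.
  apply/allP => x /mapP[k]; rewrite mem_iota => /andP[_ k5] ->.
  by have := hh k k5; case: (h k) => [|[|[|]]].
have vyY : [seq Yc (nth 0 l1) m | m <- masks] \in YV by rewrite /YV; apply: (map_f (fun l => [seq Yc (nth 0 l) m | m <- masks])); apply: inc.
have vzZ : [seq Zc (nth 0 l2) e m | m <- masks] \in ZV.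
  rewrite /ZV; apply: (allpairs_f (fun l e => [seq Zc (nth 0 l) e m | m <- masks])); first exact: inc.
  by case: e.
have := allP check _ vyY => /allP /(_ _ vzZ) /hasP [i].
rewrite mem_iota => /andP[_ i32] /andP[h1 h2].
have sm : size masks = 32 by [].
exists (nth [::] masks i).
rewrite (nth_map [::]) ?sm // in h1; rewrite (nth_map [::]) ?sm // in h2.
have nl : forall h : nat -> nat, forall k, k < 5 -> nth 0 (map h (iota 0 5)) k = h k.
  by move=> h k k5; rewrite (nth_map 0) ?size_iota // nth_iota.
by rewrite (eq_Yc _ (nl f)) in h1; rewrite (eq_Zc _ _ (nl g)) in h2; rewrite h1 h2.
Qed.

Lemma card_count n (Q : nat -> bool) : #|[set i : 'I_n | Q i]| = count Q (iota 0 n).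
Proof.
rewrite -sum1_card (eq_bigl (fun i : 'I_n => Q i)); last by move=> i; rewrite inE.
by rewrite -(big_mkord Q (fun=> 1)) /index_iota subn0 sum1_count.
Qed.

Local Open Scope ring_scope.

Section FF.
Variable q : nat.
Hypothesis q_pr : prime q.
Hypothesis q7 : (7 <= q)%N.
Local Notation F := 'F_q.

Definition sq (x : F) := [exists s : F, x == s * s].

Lemma sqP (x : F) : reflect (exists s, x = s * s) (sq x).
Proof. by apply: (iffP existsP) => [[s /eqP]|[s ->]]; exists s. Qed.

Lemma sq_mul x y : sq x -> sq y -> sq (x * y).
Proof.
move=> /sqP[s ->] /sqP[t ->]; apply/sqP; exists (s * t); by rewrite mulrACA.
Qed.

Lemma sq_inv x : sq x -> sq x^-1.
Proof. by move=> /sqP[s ->]; apply/sqP; exists s^-1; rewrite invfM. Qed.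





Lemma q_odd : odd q.
Proof.
by case/even_prime: q_pr => [q2|//]; move: q7; rewrite q2.
Qed.

Lemma primroot : exists z : F, (q.-1).-primitive_root z.
Proof.
have cF : #|F| = q by rewrite card_Fp.
pose rs := enum (predC1 (0 : F)).
have : has (q.-1).-primitive_root rs.
  apply: has_prim_root.
  - by rewrite -ltnS prednK ?prime_gt0 // prime_gt1.
  - apply/allP => x; rewrite mem_enum /= => x0.
    apply/unity_rootP.
    have h : x ^+ (q.-1).+1 = x by rewrite prednK ?prime_gt0 //; have := expf_card x; rewrite cF.
    move: h; rewrite exprS.
    by move/(congr1 (fun y => x^-1 * y)); rewrite mulrA mulVf // mul1r.
  - by rewrite enum_uniq.
  - by rewrite -cardE cardC1 cF.
by case/hasP => z _ zp; exists z.
Qed.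


Lemma unityF (x : F) : x != 0 -> x ^+ q.-1 = 1.
Proof.
move=> x0; have cF : #|F| = q by rewrite card_Fp.
have h : x ^+ (q.-1).+1 = x by rewrite prednK ?prime_gt0 //; have := expf_card x; rewrite cF.
move: h; rewrite exprS.
by move/(congr1 (fun y => x^-1 * y)); rewrite mulrA mulVf // mul1r.
Qed.

Lemma qm1_even : odd q.-1 = false.
Proof. by rewrite -(odd_halfK q_odd) odd_double. Qed.

Lemma prim_nz (z : F) : (q.-1).-primitive_root z -> z != 0.
Proof.
move=> pz; apply/eqP => z0; have := prim_expr_order pz; rewrite z0 expr0n.
have hq : (q.-1 == 0)%N = false by case: q q7 => [|[|k]].
by rewrite hq /= => /esym/eqP; rewrite oner_eq0.
Qed.

Lemma expo (z x : F) : (q.-1).-primitive_root z -> x != 0 -> exists i, x = z ^+ i.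
Proof. by move=> pz x0; case: (prim_rootP pz (unityF x0)) => i ->; exists i. Qed.

Lemma sq_even (z : F) i : ~~ odd i -> sq (z ^+ i).
Proof.
move=> ei; apply/sqP; exists (z ^+ i./2); rewrite -exprD addnn.
by have := odd_double_half i; rewrite (negbTE ei) add0n => ->.
Qed.

Lemma nonsq_z (z : F) : (q.-1).-primitive_root z -> ~~ sq z.
Proof.
move=> pz; apply/negP => /sqP[s szs].
have s0 : s != 0 by apply: contraTneq (prim_nz pz) => s0; rewrite szs s0 mul0r eqxx.
case: (expo pz s0) => j sj.
have : z ^+ 1 == z ^+ (j + j) by rewrite expr1 exprD -sj szs.
rewrite (eq_prim_root_expr pz) => /eqP/(congr1 odd).
by rewrite !odd_mod ?qm1_even // addnn odd_double.
Qed.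

Lemma exists_nsq : exists x : F, ~~ sq x.
Proof. by case: primroot => z pz; exists z; exact: nonsq_z. Qed.

Lemma nsq_mul (x y : F) : x != 0 -> y != 0 -> ~~ sq x -> ~~ sq y -> sq (x * y).
Proof.
case: primroot => z pz x0 y0.
case: (expo pz x0) => i ->; case: (expo pz y0) => j ->.
have oi : forall k, ~~ sq (z ^+ k) -> odd k.
  by move=> k; apply: contraR => /sq_even.
move=> /oi oi' /oi oj; rewrite -exprD; apply: sq_even.
by rewrite oddD oi' oj.
Qed.

Lemma sq_mulr (x y : F) : x != 0 -> sq x -> sq (x * y) -> sq y.
Proof.
move=> x0 sx sxy; have -> : y = x^-1 * (x * y) by rewrite mulrA mulVf // mul1r.
by apply: sq_mul => //; apply: sq_inv.
Qed.

Lemma sq_invE (x : F) : sq x^-1 = sq x.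
Proof.
apply/idP/idP => [h|]; last exact: sq_inv.
by rewrite -[x]invrK; apply: sq_inv.
Qed.

Lemma class_ratio (x y : F) : x != 0 -> y != 0 -> sq x = sq y -> sq (y / x).
Proof.
move=> x0 y0 e; case sy: (sq y).
  by apply: sq_mul => //; rewrite sq_invE e.
by apply: nsq_mul; rewrite ?invr_eq0 ?sq_invE ?e ?sy.
Qed.

Lemma natF_eq0 k : ((k%:R : F) == 0) = (q %| k)%N.
Proof. by rewrite -(val_eqE (k%:R : F) 0) /= val_Fp_nat. Qed.

Lemma sum2 (c : F) : c != 0 -> exists a b : F, [/\ a != 0, sq a, b != 0, sq b & a + b = c].
Proof.
move=> c0.
have nzs : forall k, (0 < k < q)%N -> (k%:R : F) != 0.
  move=> k /andP[k0 kq]; rewrite natF_eq0; apply/negP => /(dvdn_leq k0).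
  by rewrite leqNgt kq.
have sqn : forall k, sq ((k * k)%:R : F) by move=> k; apply/sqP; exists k%:R; rewrite natrM.
have [d [a0 [b0 [[d0 sd a00 sa0] [b00 sb0 e0]]]]] :
  exists d a b : F, [/\ d != 0, sq d, a != 0 & sq a] /\ [/\ b != 0, sq b & a + b = d].
  have n2 : (2%:R : F) != 0 by apply: nzs; rewrite (leq_trans _ q7).
  have n5 : (5%:R : F) != 0 by apply: nzs; rewrite (leq_trans _ q7).
  have n10 : (10%:R : F) != 0 by rewrite (natrM F 2 5) mulf_neq0.
  have n1 : (1%:R : F) != 0 by rewrite oner_eq0.
  have n3 : (3%:R : F) != 0 by apply: nzs; rewrite (leq_trans _ q7).
  have n4 : ((2 * 2)%:R : F) != 0 by rewrite natrM mulf_neq0.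
  have n9 : ((3 * 3)%:R : F) != 0 by rewrite natrM mulf_neq0.
  have s1 : sq (1 : F) by apply/sqP; exists 1; rewrite mulr1.
  case s2: (sq (2%:R : F)).
    by exists 2%:R, 1, 1; split; split; rewrite ?oner_eq0 // -(natrD F 1 1).
  case s5: (sq (5%:R : F)).
    by exists 5%:R, 1, (2 * 2)%:R; split; split; rewrite ?oner_eq0 // -(natrD F 1 (2 * 2)).
  have s10 : sq (10%:R : F).
    have -> : (10%:R : F) = 2%:R * 5%:R by rewrite -natrM.
    by apply: nsq_mul; rewrite ?s2 ?s5.
  by exists 10%:R, 1, (3 * 3)%:R; split; split; rewrite ?oner_eq0 // -(natrD F 1 (3 * 3)).
have [d' [a1 [b1 [[d10 sd1 a10 sa1] [b10 sb1 e1]]]]] :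
  exists d a b : F, [/\ d != 0, ~~ sq d, a != 0 & sq a] /\ [/\ b != 0, sq b & a + b = d].
  case: exists_nsq => w nw.
  have ex : exists k, ~~ sq (k%:R : F) by exists (val w); rewrite natr_Zp.
  pose m := ex_minn ex.
  have [nm minm] : ~~ sq (m%:R : F) /\ forall k, ~~ sq (k%:R : F) -> (m <= k)%N.
    by rewrite /m; case: ex_minnP.
  have mw : (m <= val w)%N by apply: minm; rewrite natr_Zp.
  have wq : (val w < q)%N.
    by apply: leq_trans (ltn_ord w) _; rewrite Fp_cast.
  have m0 : m != 0%N.
    by apply: (contraNneq _ nm) => ->; apply/sqP; exists 0; rewrite mulr0.
  have m1 : m != 1%N.
    by apply: (contraNneq _ nm) => ->; apply/sqP; exists 1; rewrite mulr1.
  have sm1 : sq ((m.-1)%:R : F).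
    apply: contraT => h; have := minm _ h.
    by case: (m) m0 => // k _; rewrite ltnn.
  exists m%:R, (m.-1)%:R, 1; split; split => //.
  - by apply: (contraNneq _ nm) => ->; apply/sqP; exists 0; rewrite mulr0.
  - apply: nzs; case: (m) m0 m1 mw => [|[|k]] // _ _ kw /=.
    by rewrite (leq_trans _ wq) // ltnW.
  - by apply/sqP; exists 1; rewrite mulr1.
  by case: (m) m0 => // k _; rewrite -natr1.
case sc: (sq c).
  have st : sq (c / d) by apply: class_ratio => //; rewrite sc.
  exists (c / d * a0), (c / d * b0); split.
  - by rewrite mulf_neq0 // mulf_neq0 // invr_eq0.
  - exact: sq_mul.
  - by rewrite mulf_neq0 // mulf_neq0 // invr_eq0.
  - exact: sq_mul.
  by rewrite -mulrDr e0 mulfVK.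
have st : sq (c / d') by apply: class_ratio => //; rewrite sc (negbTE sd1).
exists (c / d' * a1), (c / d' * b1); split.
- by rewrite mulf_neq0 // mulf_neq0 // invr_eq0.
- exact: sq_mul.
- by rewrite mulf_neq0 // mulf_neq0 // invr_eq0.
- exact: sq_mul.
by rewrite -mulrDr e1 mulfVK.
Qed.

End FF.
Arguments sq : clear implicits.

Lemma card_sub2 (T : finType) (a b : T) (P : pred T) : a != b ->
  #|[set i in [set a; b] | P i]| = (P a + P b)%N.
Proof.
move=> ab; rewrite (cardsD1 a) !inE eqxx /=.
rewrite (cardsD1 b) !inE eqxx orbT /= eq_sym ab /=.
suff -> : #|[set i in [set a; b] | P i] :\ a :\ b| = 0%N by rewrite addn0.
apply/eqP; rewrite cards_eq0; apply/eqP/setP => i; rewrite !inE.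
by case: (i == b); case: (i == a); rewrite ?andbF.
Qed.

Lemma pick3 (T : finType) (s : T -> bool) (j1 j2 j3 : T) :
  j1 != j2 -> j1 != j3 -> j2 != j3 ->
  exists i0 i1 j, [/\ i0 != i1, j != i0, j != i1, s i0 = s i1 &
     [/\ i0 \in [:: j1; j2; j3], i1 \in [:: j1; j2; j3] & j \in [:: j1; j2; j3]]].
Proof.
move=> d12 d13 d23.
case e12: (s j1 == s j2).
  exists j1, j2, j3; split; rewrite ?(eqP e12) ?inE ?eqxx ?orbT //.
  by rewrite eq_sym. by rewrite eq_sym.
case e13: (s j1 == s j3).
  exists j1, j3, j2; split; rewrite ?(eqP e13) ?inE ?eqxx ?orbT //.
  by rewrite eq_sym.
exists j2, j3, j1; split; rewrite ?inE ?eqxx ?orbT //.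
by move: e12 e13; case: (s j1); case: (s j2); case: (s j3).
Qed.

Section Z.
Variable q : nat.
Hypothesis q_pr : prime q.
Hypothesis q7 : (7 <= q)%N.
Local Notation F := 'F_q.

Lemma Zgood k (z : 'I_k -> F) (I : {set 'I_k}) :
  #|[set i in I | z i != 0]| != 1%N ->
  (#|[set i in I | z i != 0]| == 2%N) ==>
     (~~ odd #|[set i in I | (z i != 0) && ~~ sq q (z i)]| == sq q (-1)) ->
  exists r : 'I_k -> F, (forall i, r i != 0 /\ sq q (r i)) /\ \sum_(i in I) r i * z i = 0.
Proof.
set W := [set i in I | z i != 0].
have sumW : forall r : 'I_k -> F, \sum_(i in I) r i * z i = \sum_(i in W) r i * z i.
  move=> r; rewrite [LHS]big_mkcond [RHS]big_mkcond; apply: eq_bigr => i _.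
  rewrite inE; case: (i \in I) => //=; case: eqP => // ->; by rewrite mulr0.
have inW : forall i, i \in W -> z i != 0 by move=> i; rewrite inE => /andP[].
have s1 : sq q 1 by apply/sqP; exists 1; rewrite mulr1.
have n1 : (1 : F) != 0 by rewrite oner_eq0.
move=> W1 W2.
case: (ltngtP #|W| 2) => hW.
-
  have W0 : W = set0.
    by apply/eqP; rewrite -cards_eq0; move: hW W1; case: #|W| => [|[|]].
  exists (fun=> 1); split => // ; by rewrite sumW W0 big_set0.
-
  have [j1 j1W] : exists j, j \in W by apply/card_gt0P; rewrite (ltn_trans _ hW).
  have [j2 j2W] : exists j, j \in W :\ j1.
    by apply/card_gt0P; move: hW; rewrite (cardsD1 j1) j1W add1n ltnS; apply: ltn_trans.
  have [j3 j3W] : exists j, j \in W :\ j1 :\ j2.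
    apply/card_gt0P; move: hW; rewrite (cardsD1 j1) j1W (cardsD1 j2 (W :\ j1)) j2W.
    by rewrite !add1n !ltnS.
  case/setD1P: j2W => d21 j2W; case/setD1P: j3W => d32 /setD1P[d31 j3W].
  have [i0 [i1 [j [d01 dj0 dj1 e01 [m0 m1 mj]]]]] :=
    @pick3 _ (fun i => sq q (z i)) j1 j2 j3
      ltac:(by rewrite eq_sym) ltac:(by rewrite eq_sym) ltac:(by rewrite eq_sym).
  have inL : forall x, x \in [:: j1; j2; j3] -> x \in W.
    by move=> x; rewrite !in_cons in_nil orbF => /or3P[] /eqP->.
  have i0W := inL _ m0; have i1W := inL _ m1; have jW := inL _ mj.
  have z0 := inW _ i0W; have z1 := inW _ i1W; have zj := inW _ jW.
  have sw : sq q (z i1 / z i0) by apply: class_ratio.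
  set T := \sum_(i | (((i \in W) && (i != i0)) && (i != i1)) && (i != j)) z i.
  pose g : F := if T + z j != 0 then 1 else (2 * 2)%:R.
  have sg : sq q g by rewrite /g; case: ifP => // _; apply/sqP; exists 2%:R; rewrite natrM.
  have g0 : g != 0.
    have n2 : (2%:R : F) != 0.
      by rewrite natF_eq0 //; apply/negP => /(dvdn_leq (isT : (0 < 2)%N)); rewrite leqNgt (leq_trans _ q7).
    by rewrite /g; case: ifP => // _; rewrite natrM mulf_neq0.
  have gT : T + g * z j != 0.
    rewrite /g; case: ifP => [h|/negbFE/eqP h]; first by rewrite mul1r.
    have -> : T + (2 * 2)%:R * z j = (T + z j) + 3%:R * z j.
      have e4 : (2 * 2)%:R = 3%:R + 1 :> F by rewrite natr1.
      by rewrite e4 mulrDl mul1r addrAC addrA.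
    rewrite h add0r mulf_neq0 // natF_eq0 //.
    by apply/negP => /(dvdn_leq (isT : (0 < 3)%N)); rewrite leqNgt (leq_trans _ q7).
  pose c := - (T + g * z j).
  have c0 : c / z i0 != 0 by rewrite mulf_neq0 ?invr_eq0 // oppr_eq0.
  have [a [b [a0 sa b0 sb eab]]] := sum2 q_pr q7 c0.
  pose r := fun i => if i == i0 then a else if i == i1 then b * (z i0 / z i1)
                     else if i == j then g else 1.
  exists r; split.
    move=> i; rewrite /r; case: ifP => _; first by [].
    case: ifP => _.
      split; first by rewrite mulf_neq0 // mulf_neq0 // invr_eq0.
      by apply: sq_mul => //; rewrite -invf_div sq_invE.
    by case: ifP.
  rewrite sumW (bigD1 i0) //= (bigD1 i1) /=; last by rewrite i1W eq_sym d01.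
  rewrite (bigD1 j) /=; last by rewrite jW dj0 dj1.
  rewrite (eq_bigr (fun i => z i)); last first.
    move=> i; rewrite /r => /andP[/andP[/andP[_ /negbTE ->] /negbTE ->] /negbTE ->]; by rewrite mul1r.
  have d10 : i1 != i0 by rewrite eq_sym.
  rewrite /r !eqxx (negbTE d10) (negbTE dj0) (negbTE dj1).
  rewrite -/T [b * _]mulrA divfK // [a * _ + _]addrA -mulrDl eab divfK // /c.
  by rewrite addrC [g * z j + T]addrC subrr.
-
  have [i0 [i1 [d01 eW]]] : exists x y, x != y /\ W = [set x; y].
    by apply/cards2P; rewrite hW.
  have i0W : i0 \in W by rewrite eW !inE eqxx.
  have i1W : i1 \in W by rewrite eW !inE eqxx orbT.
  have z0 := inW _ i0W; have z1 := inW _ i1W.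
  have eNN : [set i in I | (z i != 0) && ~~ sq q (z i)] =
             [set i in [set i0; i1] | ~~ sq q (z i)].
    by apply/setP => i; rewrite -eW !inE andbA.
  move: W2; rewrite hW eNN card_sub2 //= => W2.
  have sqm : forall r x : F, r != 0 -> sq q r -> sq q (r * x) = sq q x.
    move=> r x r0 sr; apply/idP/idP; first exact: sq_mulr.
    by move=> sx; apply: sq_mul.
  have sc : sq q (- z i1 / z i0).
    rewrite -mulN1r -mulrA; set w := z i1 / z i0.
    have w0 : w != 0 by rewrite mulf_neq0 ?invr_eq0.
    case sw : (sq q w).
      apply: sq_mul => //; rewrite -(eqP W2).
      have : sq q (z i0) = sq q (z i1).
        by have := sqm _ (z i0) w0 sw; rewrite /w mulrAC -mulrA mulfV // mulr1 => ->.
      by move=> ->; case: (sq q (z i1)).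
    rewrite mulrC; apply: nsq_mul; rewrite ?sw ?oppr_eq0 ?oner_eq0 //.
    rewrite -(eqP W2).
    have : sq q (z i0) != sq q (z i1).
      apply: contraFneq sw => e; exact: class_ratio.
    by case: (sq q (z i0)); case: (sq q (z i1)).
  exists (fun i => if i == i0 then - z i1 / z i0 else 1); split.
    move=> i; case: ifP => _; last by [].
    by split => //; rewrite mulf_neq0 ?invr_eq0 ?oppr_eq0.
  rewrite sumW eW big_setU1 /=; last by rewrite inE.
  by rewrite big_set1 eqxx eq_sym (negbTE d01) divfK // mul1r addNr.
Qed.
End Z.

Section Y.
Variable p : nat.
Hypothesis p_pr : prime p.
Hypothesis p7 : (7 <= p)%N.
Local Notation R := 'Z_(p ^ 2).

Lemma p2_gt1 : (1 < p ^ 2)%N.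
Proof. by rewrite -mulnn (leq_trans _ (leq_pmulr _ _)) ?prime_gt1 ?prime_gt0. Qed.

Lemma nonunitP (x : R) : reflect (exists t : R, x = p%:R * t) (x \isn't a GRing.unit).
Proof.
apply: (iffP idP).
  rewrite -[x]natr_Zp unitZpE ?p2_gt1 // coprime_pexpl // prime_coprime // negbK.
  move=> /divnK <-; exists (x %/ p)%:R; by rewrite natrM mulrC.
move=> [t ->]; rewrite unitrM negb_and; apply/orP; left.
by rewrite unitZpE ?p2_gt1 // coprime_pexpl // prime_coprime // dvdnn.
Qed.

Lemma pp0 : p%:R * p%:R = 0 :> R.
Proof. by rewrite -natrM mulnn pchar_Zp // p2_gt1. Qed.

Lemma p_neq0 : p%:R != 0 :> R.
Proof.
rewrite -(val_eqE (p%:R : R) 0) /= val_Zp_nat ?p2_gt1 // modn_small ?prime_gt0 //.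
  by rewrite -lt0n prime_gt0.
by rewrite -mulnn -{1}(muln1 p) ltn_pmul2l ?prime_gt1 ?prime_gt0.
Qed.

Lemma nonunit_sub (x y : R) : x \isn't a GRing.unit -> y \isn't a GRing.unit ->
  (x - y) \isn't a GRing.unit.
Proof. by move=> /nonunitP[a ->] /nonunitP[b ->]; apply/nonunitP; exists (a - b); rewrite mulrBr. Qed.

Lemma nonunit_add (x y : R) : x \isn't a GRing.unit -> y \isn't a GRing.unit ->
  (x + y) \isn't a GRing.unit.
Proof. by move=> /nonunitP[a ->] /nonunitP[b ->]; apply/nonunitP; exists (a + b); rewrite mulrDr. Qed.

Lemma nonunit0 : (0 : R) \isn't a GRing.unit.
Proof. by apply/nonunitP; exists 0; rewrite mulr0. Qed.

Lemma nz_nonunit (y : R) : y \isn't a GRing.unit -> y != 0 ->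
  exists e, e \is a GRing.unit /\ y = p%:R * e.
Proof.
move=> /nonunitP[e ->] y0; exists e; split => //.
apply: contraNT y0 => /nonunitP[t ->]; by rewrite mulrA pp0 mul0r.
Qed.

Lemma two_unit : (2%:R : R) \is a GRing.unit.
Proof.
rewrite unitZpE ?p2_gt1 // coprime_pexpl // prime_coprime //.
apply/negP => /(dvdn_leq (isT : (0 < 2)%N)); by rewrite leqNgt (leq_trans _ p7).
Qed.

Lemma choose_c (t : R) : exists c : R, c \is a GRing.unit /\ (- t - c) \is a GRing.unit.
Proof.
case h1: ((- t - 1) \is a GRing.unit); first by exists 1; rewrite unitr1.
exists 2%:R; split; first exact: two_unit.
case h2: ((- t - 2%:R) \is a GRing.unit) => //.
have := nonunit_sub (negbT h2) (negbT h1).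
have -> : - t - 2%:R - (- t - 1) = -1 :> R.
  by ring.
by rewrite unitrN1.
Qed.

Lemma two_sol k (y : 'I_k -> R) (I : {set 'I_k}) (i0 i1 : 'I_k) (g e0 e1 t : R) :
  i0 != i1 -> i0 \in I -> i1 \in I ->
  e0 \is a GRing.unit -> e1 \is a GRing.unit ->
  y i0 = g * e0 -> y i1 = g * e1 ->
  \sum_(i | ((i \in I) && (i != i0)) && (i != i1)) y i = g * t ->
  exists u : 'I_k -> R, (forall i, u i \is a GRing.unit) /\ \sum_(i in I) u i * y i = 0.
Proof.
move=> d01 i0I i1I ue0 ue1 ey0 ey1 eT.
have [c [uc uc']] := choose_c t.
exists (fun i => if i == i0 then c / e0 else if i == i1 then (- t - c) / e1 else 1); split.
  move=> i; case: ifP => _; first by rewrite unitrM uc unitrV.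
  by case: ifP => _; rewrite ?unitrM ?uc' ?unitrV ?unitr1.
rewrite (bigD1 i0) //= (bigD1 i1) /=; last by rewrite i1I eq_sym d01.
rewrite (eq_bigr y); last first.
  by move=> i /andP[/andP[_ /negbTE ->] /negbTE ->]; rewrite mul1r.
rewrite eT eqxx eq_sym (negbTE d01) eqxx ey0 ey1.
rewrite mulrCA divrK // mulrCA divrK //.
by ring.
Qed.


Lemma Ygood k (y : 'I_k -> R) (I : {set 'I_k}) :
  #|[set i in I | y i \is a GRing.unit]| != 1%N ->
  ~~ ((#|[set i in I | y i \is a GRing.unit]| == 0%N) &&
      (#|[set i in I | (y i \isn't a GRing.unit) && (y i != 0)]| == 1%N)) ->
  exists u : 'I_k -> R, (forall i, u i \is a GRing.unit) /\ \sum_(i in I) u i * y i = 0.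
Proof.
set U := [set i in I | _]; set V := [set i in I | _].
move=> U1 UV.
case: (ltngtP #|U| 1) => hU; last by rewrite hU in U1.
- have nU : forall i, i \in I -> y i \isn't a GRing.unit.
    move=> i iI; apply/negP => ui.
    have : i \in U by rewrite inE iI ui.
    by move: hU; rewrite ltnS leqn0 cards_eq0 => /eqP ->; rewrite inE.
  have U0 : #|U| == 0%N by move: hU; rewrite ltnS leqn0.
  case: (ltngtP #|V| 1) => hV; last by rewrite U0 hV in UV.
  + exists (fun=> 1); split => [i|]; first exact: unitr1.
    apply: big1 => i iI; have := nU i iI => nu.
    case y0: (y i == 0); first by rewrite (eqP y0) mulr0.
    have : i \in V by rewrite inE iI nu y0.
    by move: hV; rewrite ltnS leqn0 cards_eq0 => /eqP ->; rewrite inE.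
  + have [i0 i0V] : exists j, j \in V by apply/card_gt0P; rewrite (ltn_trans _ hV).
    have [i1 i1V] : exists j, j \in V :\ i0.
      by apply/card_gt0P; move: hV; rewrite (cardsD1 i0) i0V add1n ltnS.
    case/setD1P: i1V => d10 i1V.
    move: i0V i1V; rewrite !inE => /andP[i0I /andP[n0 z0]] /andP[i1I /andP[n1 z1]].
    have [e0 [ue0 ey0]] := nz_nonunit n0 z0.
    have [e1 [ue1 ey1]] := nz_nonunit n1 z1.
    have : \sum_(i | ((i \in I) && (i != i0)) && (i != i1)) y i \isn't a GRing.unit.
      apply: (big_ind (fun x : R => x \isn't a GRing.unit)).
      - exact: nonunit0.
      - by move=> a b; apply: nonunit_add.
      by move=> i /andP[/andP[iI _] _]; apply: nU.
    case/nonunitP => t eT.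
    apply: (two_sol (i0 := i0) (i1 := i1) (g := p%:R) (e0 := e0) (e1 := e1) (t := t));
      by [rewrite eq_sym |].
- have [i0 i0U] : exists j, j \in U by apply/card_gt0P; rewrite (ltn_trans _ hU).
  have [i1 i1U] : exists j, j \in U :\ i0.
    by apply/card_gt0P; move: hU; rewrite (cardsD1 i0) i0U add1n ltnS.
  case/setD1P: i1U => d10 i1U.
  move: i0U i1U; rewrite !inE => /andP[i0I u0] /andP[i1I u1].
  apply: (two_sol (i0 := i0) (i1 := i1) (g := 1) (e0 := y i0) (e1 := y i1)
            (t := \sum_(i | ((i \in I) && (i != i0)) && (i != i1)) y i));
    by [rewrite eq_sym | rewrite mul1r |].
Qed.

End Y.

Lemma natr_modN (S : pzRingType) (N x : nat) : N%:R = 0 :> S -> (x %% N)%:R = x%:R :> S.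
Proof.
move=> N0; rewrite {2}(divn_eq x N) natrD natrM N0 mulr0 add0r //.
Qed.

Section Phi.
Variable n : nat.
Hypothesis n_gt1 : (1 < n)%N.
Variable S : pzRingType.
Hypothesis nS : n%:R = 0 :> S.

Definition phi (w : 'Z_n) : S := (nat_of_ord w)%:R.

Lemma NS : ((Zp_trunc n).+2)%:R = 0 :> S.
Proof. by rewrite Zp_cast. Qed.

Lemma phiD a b : phi (a + b) = phi a + phi b.
Proof. by rewrite /phi /= natr_modN ?NS // natrD. Qed.

Lemma phiM a b : phi (a * b) = phi a * phi b.
Proof. by rewrite /phi /= natr_modN ?NS // natrM. Qed.

Lemma phi0 : phi 0 = 0.
Proof. by []. Qed.

Lemma phi_nat m : phi m%:R = m%:R.
Proof. by rewrite /phi val_Zp_nat // natr_modN. Qed.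

Lemma phi_sum k (I : {set 'I_k}) (F : 'I_k -> 'Z_n) :
  phi (\sum_(i in I) F i) = \sum_(i in I) phi (F i).
Proof. by apply: (big_morph phi phiD phi0). Qed.

End Phi.

Section Main.
Variables p q : nat.
Hypotheses (p_pr : prime p) (q_pr : prime q) (pq : p != q) (p7 : (7 <= p)%N) (q7 : (7 <= q)%N).
Local Notation n := (p ^ 2 * q)%N.
Local Notation RY := 'Z_(p ^ 2).
Local Notation F := 'F_q.

Lemma n_gt1 : (1 < n)%N.
Proof. by rewrite (leq_trans (p2_gt1 p_pr) _) // leq_pmulr // prime_gt0. Qed.

Lemma nY : n%:R = 0 :> RY.
Proof. by rewrite natrM pchar_Zp ?mul0r // p2_gt1. Qed.

Lemma nZ : n%:R = 0 :> F.
Proof. by rewrite natrM pchar_Fp_0 // mulr0. Qed.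

Definition phi1 (w : 'Z_n) : RY := phi _ w.
Definition phi2 (w : 'Z_n) : F := phi _ w.

Lemma cop_p2q : coprime (p ^ 2) q.
Proof. by rewrite coprime_pexpl // prime_coprime // dvdn_prime2. Qed.

Lemma zero_det (w : 'Z_n) : phi1 w = 0 -> phi2 w = 0 -> w = 0.
Proof.
move=> /eqP h1 /eqP h2.
have d1 : (p ^ 2 %| w)%N.
  by move: h1; rewrite /phi1 /phi -(val_eqE ((w : nat)%:R : RY) 0) /= val_Zp_nat ?p2_gt1.
have d2 : (q %| w)%N by move: h2; rewrite /phi2 /phi natF_eq0.
have dn : (n %| w)%N by rewrite Gauss_dvd ?cop_p2q ?d1.
have wn : (w < n)%N by apply: leq_trans (ltn_ord w) _; rewrite Zp_cast // n_gt1.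
apply: val_inj => /=; move: dn; rewrite /dvdn modn_small //.
by move/eqP.
Qed.

Lemma legendre_sq v : ~~ (p %| v)%N -> legendre p v ^+ 2 = 1.
Proof. by move=> h; rewrite /legendre (negbTE h); case: ifP. Qed.

Lemma primes_n : perm_eq (primes n) [:: p; q].
Proof.
apply: uniq_perm; first exact: primes_uniq.
  by rewrite /= inE andbT.
move=> r; rewrite primesM ?expn_gt0 ?prime_gt0 // primesX // !primes_prime //.
by rewrite !inE.
Qed.

Lemma jacobi_unit (a : 'Z_n) : ~~ (p %| a)%N -> jacobi a = legendre q a.
Proof.
move=> h; rewrite /jacobi (perm_big _ primes_n) !big_cons big_nil /= mulr1.
rewrite !lognM ?expn_gt0 ?prime_gt0 // !logn_prime // eqxx (eq_sym q p) (negbTE pq) /=.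
by rewrite legendre_sq // mul1r eqxx expr1.
Qed.

Lemma sq_legendre v : sq q (v%:R : F) = [exists x : 'I_q, ((x * x) %% q == v %% q)%N].
Proof.
apply/sqP/existsP => [[s e]|[x /eqP e]].
  have sq' : (s < q)%N by apply: leq_trans (ltn_ord s) _; rewrite Fp_cast.
  exists (Ordinal sq') => /=; apply/eqP.
  have ss : s * s = ((s : nat) * s)%:R :> F by rewrite natrM natr_Zp.
  by rewrite -[RHS](val_Fp_nat q_pr) e ss val_Fp_nat.
exists (x : nat)%:R; rewrite -natrM -(Fp_nat_mod q_pr) -e Fp_nat_mod //.
Qed.

Lemma Sn_phi (a : 'Z_n) :
  (a \in Sn n) = [&& phi1 a \is a GRing.unit, phi2 a != 0 & sq q (phi2 a)].
Proof.
rewrite /Sn inE.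
have ua : (a \is a GRing.unit) = (phi1 a \is a GRing.unit) && (phi2 a != 0).
  rewrite -{1}(natr_Zp a) unitZpE ?n_gt1 // coprimeMl.
  rewrite /phi1 /phi unitZpE ?p2_gt1 // /phi2 natF_eq0 // -prime_coprime //.
rewrite ua; case: (phi1 a \is a GRing.unit) / boolP => u1 //=.
case: (phi2 a != 0) / boolP => u2 //=.
have np : ~~ (p %| a)%N.
  move: u1; rewrite /phi1 /phi unitZpE ?p2_gt1 // coprime_pexpl // prime_coprime //.
have nq : ~~ (q %| a)%N by move: u2; rewrite /phi2 /phi natF_eq0.
rewrite jacobi_unit // /phi2 /phi sq_legendre /legendre (negbTE nq).
by case: ifP.
Qed.

End Main.

Section Up.
Variables p q : nat.
Hypotheses (p_pr : prime p) (q_pr : prime q) (pq : p != q) (p7 : (7 <= p)%N) (q7 : (7 <= q)%N).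
Local Notation n := (p ^ 2 * q)%N.
Local Notation RY := 'Z_(p ^ 2).
Local Notation F := 'F_q.

Lemma phi1_crt (u : RY) (r : F) :
  phi1 ((chinese (p ^ 2) q u r)%:R : 'Z_n) = u.
Proof.
rewrite /phi1 phi_nat ?n_gt1 ?nY // -(Zp_nat_mod (p2_gt1 p_pr)).
by rewrite chinese_modl ?cop_p2q // Zp_nat_mod ?p2_gt1 // natr_Zp.
Qed.

Lemma phi2_crt (u : RY) (r : F) :
  phi2 ((chinese (p ^ 2) q u r)%:R : 'Z_n) = r.
Proof.
rewrite /phi2 phi_nat ?n_gt1 ?nZ // -(Fp_nat_mod q_pr).
by rewrite chinese_modr ?cop_p2q // Fp_nat_mod // natr_Zp.
Qed.

Lemma upper : Azs_prop (Sn n) 5.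
Proof.
move=> x.
pose y i := phi1 (x i); pose z i := phi2 (x i).
pose vY (i : 'I_5) : nat := if y i \is a GRing.unit then 0 else if y i == 0 then 2 else 1.
pose vZ (i : 'I_5) : nat := if z i == 0 then 0 else if sq q (z i) then 1 else 2.
have [m /andP[hY hZ]] := @comb5 (fun k => vY (inord k)) (fun k => vZ (inord k)) (sq q (-1))
  (fun k _ => ltac:(by rewrite /vY; case: ifP => _ //; case: ifP))
  (fun k _ => ltac:(by rewrite /vZ; case: ifP => _ //; case: ifP)).
pose I := [set i : 'I_5 | nth false m i].
have bridge : forall P : 'I_5 -> bool, cnt m (fun k => P (inord k)) = #|[set i in I | P i]|.
  move=> P; rewrite /cnt -card_count; apply: eq_card => i; by rewrite !inE inord_val.
have eU : [set i in I | vY i == 0%N] = [set i in I | y i \is a GRing.unit].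
  by apply/setP => i; rewrite !inE /vY; case: (y i \is a GRing.unit); case: (y i == 0).
have eV : [set i in I | vY i == 1%N] = [set i in I | (y i \isn't a GRing.unit) && (y i != 0)].
  by apply/setP => i; rewrite !inE /vY; case: (y i \is a GRing.unit); case: (y i == 0).
have eW : [set i in I | vZ i != 0%N] = [set i in I | z i != 0].
  by apply/setP => i; rewrite !inE /vZ; case: (z i == 0); case: (sq q (z i)).
have eN : [set i in I | vZ i == 2%N] = [set i in I | (z i != 0) && ~~ sq q (z i)].
  by apply/setP => i; rewrite !inE /vZ; case: (z i == 0); case: (sq q (z i)).
move: hY; rewrite /Yc (bridge (fun i => vY i == 0%N)) (bridge (fun i => vY i == 1%N)) eU eV.
case/and3P => hne hU hUV.
move: hZ; rewrite /Zc (bridge (fun i => vZ i != 0%N)) (bridge (fun i => vZ i == 2%N)) eW eN.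
case/andP => hW hWN.
have [u [uu su]] := Ygood p_pr p7 hU hUV.
have [r [rr sr]] := Zgood q_pr q7 hW hWN.
exists I; split.
  case/hasP: hne => k; rewrite mem_iota => /andP[_ k5] mk.
  apply/set0Pn; exists (inord k); rewrite inE inordK //.
exists (fun i => (chinese (p ^ 2) q (u i) (r i))%:R); split.
  move=> i _; rewrite Sn_phi // phi1_crt phi2_crt uu.
  by case: (rr i) => -> ->.
apply: zero_det => //.
  rewrite /phi1 phi_sum ?n_gt1 ?nY //; rewrite -[RHS]su; apply: eq_bigr => i _.
  by rewrite phiM ?n_gt1 ?nY // -/(phi1 _) phi1_crt.
rewrite /phi2 phi_sum ?n_gt1 ?nZ //; rewrite -[RHS]sr; apply: eq_bigr => i _.
by rewrite phiM ?n_gt1 ?nZ // -/(phi2 _) phi2_crt.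
Qed.

End Up.

Section Low.
Variables p q : nat.
Hypotheses (p_pr : prime p) (q_pr : prime q) (pq : p != q) (p7 : (7 <= p)%N) (q7 : (7 <= q)%N).
Local Notation n := (p ^ 2 * q)%N.
Local Notation RY := 'Z_(p ^ 2).
Local Notation F := 'F_q.

Definition bad (c v : nat) : nat :=
  match v with 0 => q | 1 => p * q | 2 => p ^ 2 | 3 => p ^ 2 * c | _ => 0 end%N.

Lemma ybad c v : (2 <= v)%N -> ((bad c v)%:R : RY) = 0.
Proof.
by case: v => [|[|[|[|v]]]] //= _; rewrite ?natrM ?(pp0 p_pr) ?mul0r.
Qed.

Lemma nonunit_mul (a b : RY) : b \isn't a GRing.unit -> (a * b) \isn't a GRing.unit.
Proof. by move=> /(nonunitP p_pr)[t ->]; apply/(nonunitP p_pr); exists (a * t); rewrite mulrCA. Qed.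

Lemma low k (nu : F) : (k <= 4)%N -> ~~ sq q nu ->
  ~ has_Azs (Sn n) (fun i : 'I_k => ((bad (val (- nu)) i)%:R : 'Z_n)).
Proof.
move=> k4 nnu [I [I0 [a [aS sum0]]]].
have nu0 : nu != 0 by apply: contraNneq nnu => ->; apply/sqP; exists 0; rewrite mulr0.
set c := val (- nu).
have vk : forall i : 'I_k, (i < 4)%N by move=> i; exact: leq_trans (ltn_ord i) k4.
have vinj : forall i j : 'I_k, (i : nat) = j -> i = j by move=> i j; apply: val_inj.
pose u i := phi1 (a i); pose r i := phi2 (a i).
have hu : forall i, i \in I -> u i \is a GRing.unit.
  by move=> i /aS; rewrite Sn_phi // => /and3P[].
have hr : forall i, i \in I -> r i != 0 /\ sq q (r i).
  by move=> i /aS; rewrite Sn_phi // => /and3P[].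
have H1 : \sum_(i in I) u i * (bad c i)%:R = 0 :> RY.
  have := congr1 (@phi1 p q) sum0; rewrite /phi1 phi_sum ?n_gt1 ?nY // => e.
  apply: etrans (etrans _ e) _; last by [].
  by apply: eq_bigr => i _; rewrite phiM ?n_gt1 ?nY // phi_nat ?n_gt1 ?nY.
have H2 : \sum_(i in I) r i * (bad c i)%:R = 0 :> F.
  have := congr1 (@phi2 p q) sum0; rewrite /phi2 phi_sum ?n_gt1 ?nZ // => e.
  apply: etrans (etrans _ e) _; last by [].
  by apply: eq_bigr => i _; rewrite phiM ?n_gt1 ?nZ // phi_nat ?n_gt1 ?nZ.
have Y0 : forall i, i \in I -> (i : nat) != 0%N.
  move=> i0 i0I; apply/negP => /eqP v0.
  move: H1; rewrite (bigD1 i0) //= v0 /= => /eqP; rewrite addr_eq0 => /eqP e.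
  have : (u i0 * q%:R) \is a GRing.unit.
    by rewrite unitrM hu // unitZpE ?p2_gt1 // coprime_pexpl // prime_coprime // dvdn_prime2 // pq.
  rewrite e unitrN; apply/negP.
  apply: (big_ind (fun x : RY => x \isn't a GRing.unit)).
  - exact: nonunit0.
  - by move=> x y; apply: nonunit_add.
  move=> i /andP[iI ni]; apply: nonunit_mul.
  have : (i : nat) != 0%N by apply: contraNneq ni => e0; apply/eqP/vinj; rewrite e0 v0.
  case: (i : nat) => [|[|v]] // _.
    by rewrite /= natrM mulrC; apply: nonunit_mul; apply/(nonunitP p_pr); exists 1; rewrite mulr1.
  by rewrite ybad //; exact: nonunit0.
have Y1 : forall i, i \in I -> (i : nat) != 1%N.
  move=> i1 i1I; apply/negP => /eqP v1.
  move: H1; rewrite (bigD1 i1) //= v1 /= big1 ?addr0; last first.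
    move=> i /andP[iI ni]; rewrite ybad ?mulr0 //.
    have := Y0 i iI; have : (i : nat) != 1%N.
      by apply: contraNneq ni => e1; apply/eqP/vinj; rewrite e1 v1.
    by case: (i : nat) => [|[|v]].
  rewrite natrM mulrCA => /(congr1 (fun t => t * (u i1 * q%:R)^-1)).
  rewrite mul0r mulrK; first by move=> /eqP; rewrite (negbTE (p_neq0 p_pr)).
  by rewrite unitrM hu // unitZpE ?p2_gt1 // coprime_pexpl // prime_coprime // dvdn_prime2 // pq.
have V23 : forall i, i \in I -> ((i : nat) == 2%N) || ((i : nat) == 3%N).
  move=> i iI; have := Y0 i iI; have := Y1 i iI; have := vk i.
  by case: (i : nat) => [|[|[|[|v]]]].
have P2 : ((p ^ 2)%:R : F) != 0.
  rewrite natF_eq0 //; rewrite Euclid_dvdX // negb_and; apply/orP; left.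
  by rewrite dvdn_prime2 // eq_sym (negbTE pq).
have cE : (c%:R : F) = - nu by rewrite natr_Zp.
have Pnu : ((p ^ 2)%:R : F) * - nu != 0 by rewrite mulf_neq0 // oppr_eq0.
have rest : forall (j1 j2 : 'I_k), (j1 : nat) = 2%N -> (j2 : nat) = 3%N ->
    forall i, i \in I -> i != j1 -> i != j2 -> False.
  move=> j1 j2 e1 e2 i iI n1 n2; case/orP: (V23 i iI) => /eqP ei.
    by move/eqP: n1; apply; apply: vinj; rewrite ei e1.
  by move/eqP: n2; apply; apply: vinj; rewrite ei e2.
case: (pickP [pred i | (i \in I) && ((i : nat) == 2%N)]) => [i2 /andP[i2I /eqP v2] | no2].
  case: (pickP [pred i | (i \in I) && ((i : nat) == 3%N)]) => [i3 /andP[i3I /eqP v3] | no3].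
    have d23 : i3 != i2 by apply/negP => /eqP e; move: v3; rewrite e v2.
    move: H2; rewrite (bigD1 i2) //= (bigD1 i3) /=; last by rewrite i3I d23.
    rewrite big1 ?addr0; last first.
      by move=> i /andP[/andP[iI n2] n3]; exfalso; apply: (rest i2 i3 v2 v3 i).
    rewrite v2 v3 /= natrM cE => e.
    have e' : r i2 = r i3 * nu.
      apply/eqP; rewrite -subr_eq0; apply/eqP; apply: (mulfI P2).
      by rewrite mulr0 -e; ring.
    have r30 := (hr i3 i3I).1.
    move: nnu; rewrite (_ : nu = r i2 / r i3); last by rewrite e' mulrC mulKf.
    by rewrite sq_mul // ?sq_inv //; [case: (hr i2 i2I) | case: (hr i3 i3I)].
  move: H2; rewrite (bigD1 i2) //= big1 ?addr0; last first.
    move=> i /andP[iI n2]; exfalso; case/orP: (V23 i iI) => /eqP ei.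
      by move/eqP: n2; apply; apply: vinj; rewrite ei v2.
    by have := no3 i; rewrite /= iI ei.
  by rewrite v2 /= => /eqP; rewrite mulf_eq0 (negbTE P2) orbF; apply/negP; case: (hr i2 i2I).
case/set0Pn: I0 => i3 i3I.
have v3 : (i3 : nat) = 3%N.
  case/orP: (V23 i3 i3I) => /eqP // e; by have := no2 i3; rewrite /= i3I e.
move: H2; rewrite (bigD1 i3) //= big1 ?addr0; last first.
  move=> i /andP[iI n3]; exfalso; case/orP: (V23 i iI) => /eqP ei.
    by have := no2 i; rewrite /= iI ei.
  by move/eqP: n3; apply; apply: vinj; rewrite ei v3.
rewrite v3 /= natrM cE => /eqP; rewrite mulf_eq0 (negbTE Pnu) orbF; apply/negP.
by case: (hr i3 i3I).
Qed.

End Low.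

Local Close Scope ring_scope.
Unset Implicit Arguments.

Theorem theorem4p5 (p' q : nat) :
  prime p' -> prime q -> p' != q -> (7 <= p')%N -> (7 <= q)%N ->
  is_DA (Sn (p' ^ 2 * q)) 5.
Proof.
move=> pp qp pq p7 q7; split; first exact: upper.
move=> k Hk; rewrite leqNgt; apply/negP => k5.
have [nu nnu] := exists_nsq qp q7.
exact: (@low p' q pp qp pq k nu k5 nnu (Hk _)).
Qed.
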